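(* Let $q>0$ be transcendental, or $q\ge4$. Then for every real number $a$ there is at most one proper path $\mathbf m$ for $q$ with $c(q,\mathbf m)=a$. In particular, the weight $w_q$ is unique.
   Context: Let $q>0$. For an integer $k\ge0$ and $\mathbf m=(m_0,\dots,m_k)\in\mathbb Z^{k+1}$ put $\mathbf m_j=(m_0,\dots,m_j)$, $0\le j\le k$. Define $c(q,\mathbf m_0)=m_0$ and recursively $c(q,\mathbf m_j)=m_j+\frac{1}{q\,c(q,\mathbf m_{j-1})}$ for $1\le j\le k$, so that $c(q,\mathbf m)=m_k+\cfrac{1}{qm_{k-1}+\cfrac{q}{\ddots+\cfrac{q}{qm_0}}}$. The vector $\mathbf m$ is a path for $q$ (of length $k$) if $c(q,\mathbf m_j)\ne0$ for $0\le j\le k-1$ (all denominators nonzero). A path is proper if $m_j\ne0$ for all $0\le j\le k-1$. The weight of a path is $w_q(\mathbf m)=q^{k/2}\prod_{j=0}^{k-1}|c(q,\mathbf m_j)|$ (and $w_q(\mathbf m)=1$ if $k=0$). The weight $w_q$ is called unique if $w_q(\mathbf m)=w_q(\mathbf n)$ for all paths $\mathbf m,\mathbf n$ for $q$ with $c(q,\mathbf m)=c(q,\mathbf n)$. *)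

(* Defs.v *)
From HB Require Import structures.
From mathcomp Require Import all_boot all_order all_algebra.
From mathcomp Require Import reals.
Set Implicit Arguments. Unset Strict Implicit. Unset Printing Implicit Defensive.
Import Order.TTheory GRing.Theory Num.Theory.
Local Open Scope ring_scope.

Section Defs.
Variable R : realType.

Definition algebraic (q : R) : Prop :=
  exists p : {poly rat}, p != 0 /\ root (map_poly ratr p) q.
Definition transcendental (q : R) : Prop := ~ algebraic q.

(* A vector m = (m_0, ..., m_k) is represented as m0 :: ms, k = size ms. *)
Definition cstep (q : R) (c : R) (mj : int) : R := mj%:~R + 1 / (q * c).

Definition cval (q : R) (m0 : int) (ms : seq int) : R :=
  foldl (cstep q) m0%:~R ms.

(* [c(q,m_0); ...; c(q,m_{k-1})] *)
Definition cdenoms (q : R) (m0 : int) (ms : seq int) : seq R :=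
  belast (m0%:~R) (scanl (cstep q) m0%:~R ms).

Definition is_path (q : R) (m0 : int) (ms : seq int) : Prop :=
  all (fun x => x != 0) (cdenoms q m0 ms).

Definition is_proper (m0 : int) (ms : seq int) : Prop :=
  all (fun x => x != 0) (belast m0 ms).

Definition is_proper_path (q : R) (m0 : int) (ms : seq int) : Prop :=
  is_path q m0 ms /\ is_proper m0 ms.

Definition weight (q : R) (m0 : int) (ms : seq int) : R :=
  Num.sqrt q ^+ size ms * \prod_(x <- cdenoms q m0 ms) `|x|.

Definition weight_unique (q : R) : Prop :=
  forall (m0 : int) (ms : seq int) (n0 : int) (ns : seq int),
    is_path q m0 ms -> is_path q n0 ns ->
    cval q m0 ms = cval q n0 ns -> weight q m0 ms = weight q n0 ns.

End Defs.

(* Main.v *)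
Require Import Defs.
From HB Require Import structures.
From mathcomp Require Import all_boot all_order all_algebra.
From mathcomp Require Import zify.
From mathcomp Require Import reals ring lra.
Import Order.TTheory GRing.Theory Num.Theory.
Local Open Scope ring_scope.

Section Aux.
Variable R : realType.

Lemma int_small (z : int) : `|z%:~R : R| < 1 -> z = 0.
Proof.
move=> h; have h' : `|z| < 1 by rewrite -(ltr_int R) intr_norm.
lia.
Qed.

Lemma int_ge1 (z : int) : z != 0 -> 1 <= `|z%:~R : R|.
Proof. by move=> h; apply: norm_intr_ge1; rewrite ?intr_int ?intr_eq0. Qed.

Variable q : R.

Definition cv (z : R) s := foldl (cstep q) z s.
Definition dn (z : R) s := belast z (scanl (cstep q) z s).
Definition W (z : R) s := Num.sqrt q ^+ size s * \prod_(x <- dn z s) `|x|.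
Definition prop (s : seq int) :=
  if s is x :: t then all (fun y => y != 0) (belast x t) else true.

Lemma dn_cons z x s : dn z (x :: s) = z :: dn (cstep q z x) s.
Proof. by []. Qed.

Lemma W_cons z x s : W z (x :: s) = Num.sqrt q * `|z| * W (cstep q z x) s.
Proof. rewrite /W dn_cons big_cons /= exprS; ring. Qed.

Lemma dn_rcons z s x : dn z (rcons s x) = rcons (dn z s) (cv z s).
Proof. by elim: s z => [|y s IH] z //=; rewrite dn_cons IH. Qed.

Lemma step0 z y : 0 < q -> z != 0 -> cstep q (cstep q z 0) y = z + y%:~R.
Proof.
move=> q0 z0; rewrite /cstep /=; field.
by rewrite z0 gt_eqF.
Qed.

Hypothesis q0 : 0 < q.

Lemma zero_facts z y s : z != 0 ->
  [/\ cv z (0 :: y :: s) = cv (z + y%:~R) s,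
      dn z (0 :: y :: s) = z :: cstep q z 0 :: dn (z + y%:~R) s &
      W z (0 :: y :: s) = W (z + y%:~R) s].
Proof.
move=> z0; rewrite /cv /= !dn_cons !W_cons step0 //; split => //.
have key : Num.sqrt q * `|z| * (Num.sqrt q * `|cstep q z 0|) = 1.
  rewrite mulrCA !mulrA -expr2 sqr_sqrtr ?ltW // -mulrA -normrM /cstep /= add0r mul1r.
  have -> : z * (q * z)^-1 = q^-1 by field; rewrite z0 gt_eqF.
  by rewrite normfV gtr0_norm // mulfV ?gt_eqF.
by rewrite mulrA key mul1r.
Qed.

Lemma prop_cons a s : a != 0 -> prop s -> prop (a :: s).
Proof. by case: s => [|w r] //= ->. Qed.

Definition nz (s : seq R) := all (fun x => x != 0) s.

Lemma nz_cons a l : nz (a :: l) = (a != 0) && nz l.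
Proof. by []. Qed.

Lemma reduce n : forall s z, (size s <= n)%N -> nz (dn z s) ->
  exists d : int, exists s',
    [/\ (size s' <= size s)%N, prop s', nz (dn (z + d%:~R) s'),
        cv (z + d%:~R) s' = cv z s & W (z + d%:~R) s' = W z s].
Proof.
elim: n => [|n IH] s z.
  by case: s => // _ _; exists 0, [::]; rewrite addr0.
have triv : prop s -> nz (dn z s) -> exists d : int, exists s',
    [/\ (size s' <= size s)%N, prop s', nz (dn (z + d%:~R) s'),
        cv (z + d%:~R) s' = cv z s & W (z + d%:~R) s' = W z s].
  by move=> ps nzs; exists 0, s; rewrite addr0.
have zr : forall (z : R) (w : int) (r s0 : seq int), (size r <= n)%N -> (size r < size s0)%N ->
    nz (dn z (0 :: w :: r)) -> exists d : int, exists s',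
    [/\ (size s' <= size s0)%N, prop s', nz (dn (z + d%:~R) s'),
        cv (z + d%:~R) s' = cv z (0 :: w :: r) & W (z + d%:~R) s' = W z (0 :: w :: r)].
  move=> z' w r s0 hr hr0 hnz; move: hnz; rewrite dn_cons nz_cons; case/andP => z0 hp.
  have [e1 e2 e3] := zero_facts z' w r z0.
  have {}hp : nz (dn (z' + w%:~R) r).
    by move: hp; rewrite dn_cons step0 // nz_cons; case/andP.
  have [d [s' [h1 h2 h3 h4 h5]]] := IH r _ hr hp.
  exists (w + d), s'; rewrite intrD addrA; split => //.
  - by apply: leq_trans h1 (ltnW hr0).
  - by rewrite h4 e1.
  - by rewrite h5 e3.
case: s triv => [|x [|y t]] triv hs hnz; first by apply: triv.
  by apply: triv.
have [x0|xn0] := eqVneq x 0.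
  by subst x; apply: (zr z y t) => //=; move: hs => /=; rewrite ltnS => /ltnW.
move: hnz; rewrite dn_cons nz_cons; case/andP => z0 hp.
have [d1 [s1 [h1 h2 h3 h4 h5]]] := IH (y :: t) (cstep q z x) hs hp.
have ec : cstep q z (x + d1) = cstep q z x + d1%:~R by rewrite /cstep intrD; ring.
have P1 : nz (dn z ((x + d1) :: s1)) by rewrite dn_cons nz_cons z0 ec.
have E1 : cv z ((x + d1) :: s1) = cv z [:: x, y & t] by rewrite /cv /= ec.
have E2 : W z ((x + d1) :: s1) = W z [:: x, y & t] by rewrite [LHS]W_cons [RHS]W_cons ec h5.
have [a0|an0] := eqVneq (x + d1) 0; last first.
  exists 0, ((x + d1) :: s1); rewrite addr0; split => //.
  by apply: prop_cons.
case: s1 h1 h2 h3 h4 h5 P1 E1 E2 => [|w r] h1 h2 h3 h4 h5 P1 E1 E2.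
  by exists 0, [:: x + d1]; rewrite addr0; split.
rewrite a0 in P1 E1 E2.
have [d [s' [g1 g2 g3 g4 g5]]] := zr z w r [:: x, y & t] ltac:(simpl in *; lia)
   ltac:(simpl in *; lia) P1.
by exists d, s'; split => //; rewrite ?g4 ?g5.
Qed.

End Aux.

Section Four.
Variable R : realType.
Variable q : R.
Hypothesis q4 : 4 <= q.

Lemma small c : 1/2 < `|c| -> `|1 / (q * c)| < 1/2 /\ 1 / (q * c) != 0.
Proof.
move=> hc.
have c0 : c != 0 by rewrite -normr_gt0; apply: lt_trans hc; lra.
have q0 : 0 < q by have := q4; lra.
have qc : q * c != 0 by rewrite mulf_eq0 negb_or gt_eqF // c0.
split; last by rewrite div1r invr_eq0.
have e : `|1 / (q * c)| * `|q * c| = 1.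
  by rewrite -normrM div1r mulVf // normr1.
rewrite [`|q * c|]normrM (gtr0_norm q0) in e.
have qc2 : 2 < q * `|c| by have := q4; nra.
have := normr_ge0 (1 / (q * c)); nra.
Qed.

Lemma bound m0 ms : all (fun x : int => x != 0) (m0 :: ms) -> 1/2 < `|cval q m0 ms|.
Proof.
elim/last_ind: ms => [|ms x IH].
  by rewrite /= andbT => /(int_ge1 R) h; rewrite /cval /=; lra.
rewrite -rcons_cons all_rcons => /andP [x0 /IH h].
rewrite /cval foldl_rcons -/(cval q m0 ms) /cstep.
have [h1 _] := small _ h.
have := @int_ge1 R _ x0.
have := ler_normB (x%:~R + 1 / (q * cval q m0 ms)) (1 / (q * cval q m0 ms)).
rewrite addrK; lra.
Qed.

Lemma cdenoms_rcons m0 ms x :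
  cdenoms q m0 (rcons ms x) = rcons (cdenoms q m0 ms) (cval q m0 ms).
Proof. exact: dn_rcons. Qed.

Lemma proper_path m0 ms : is_proper m0 ms -> is_path q m0 ms.
Proof.
elim/last_ind: ms => [|ms x IH] //.
rewrite /is_proper /is_path belast_rcons cdenoms_rcons all_rcons => h.
apply/andP; split.
  have hb := bound _ _ h; rewrite -normr_gt0; move: hb; set u := `|_|; lra.
rewrite /is_path in IH; apply: IH; move: h; rewrite /is_proper.
elim/last_ind: ms {x} => [|ms y _] //.
by rewrite belast_rcons -rcons_cons all_rcons => /andP [].
Qed.

Lemma all_belast (m0 : int) ms : all (fun x : int => x != 0) (m0 :: ms) ->
  is_proper m0 ms.
Proof.
rewrite /is_proper; elim/last_ind: ms => [|ms y _] //.
by rewrite belast_rcons -rcons_cons all_rcons => /andP [].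
Qed.

Lemma uniq4 ms : forall m0 n0 ns, is_proper m0 ms -> is_proper n0 ns ->
  cval q m0 ms = cval q n0 ns -> m0 = n0 /\ ms = ns.
Proof.
elim/last_ind: ms => [|ms x IH] m0 n0 ns.
  case/lastP: ns => [|ns y] _.
    by rewrite /cval /= => _ /intr_inj.
  rewrite /is_proper belast_rcons => hn.
  rewrite /cval foldl_rcons -/(cval q n0 ns) /cstep /= => e.
  have [h1 h2] := small _ (bound _ _ hn).
  have : m0 - y = 0.
    apply: (int_small R); rewrite intrB e addrAC subrr add0r; lra.
  move/eqP; rewrite subr_eq0 => /eqP my; move: e h2; rewrite my.
  by move=> ee /negP; elim; apply/eqP; apply: (@addrI _ (y%:~R)); rewrite addr0 -ee.
rewrite {1}/is_proper belast_rcons => hm.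
case/lastP: ns => [|ns y].
  move=> _; rewrite /cval foldl_rcons -/(cval q m0 ms) /cstep /= => e.
  have [h1 h2] := small _ (bound _ _ hm).
  have : n0 - x = 0.
    apply: (int_small R); rewrite intrB -e addrAC subrr add0r; lra.
  move/eqP; rewrite subr_eq0 => /eqP my; move: e h2; rewrite my.
  by move/eqP; rewrite -subr_eq0 addrAC subrr add0r => ->.
rewrite /is_proper belast_rcons => hn.
rewrite /cval !foldl_rcons -/(cval q m0 ms) -/(cval q n0 ns) /cstep /= => e.
have [h1 h2] := small _ (bound _ _ hm).
have [h3 h4] := small _ (bound _ _ hn).
have : x - y = 0.
  apply: (int_small R); rewrite intrB.
  have -> : x%:~R - y%:~R = 1 / (q * cval q n0 ns) - 1 / (q * cval q m0 ms) :> R.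
    by move: e; lra.
  have := ler_normB (1 / (q * cval q n0 ns)) (1 / (q * cval q m0 ms)); lra.
move/eqP; rewrite subr_eq0 => /eqP xy; subst y.
move/addrI: e => e.
have e' : cval q m0 ms = cval q n0 ns.
  have qp : q != 0 by rewrite gt_eqF //; have := q4; lra.
  move: e; rewrite !div1r => /invr_inj /(mulfI qp) //.
have [-> ->] := IH m0 n0 ns (all_belast _ _ hm) (all_belast _ _ hn) e'.
by [].
Qed.

End Four.

Section Poly.
Variable R : realType.

Definition ev (x : R) (p : {poly rat}) := (map_poly (ratr : rat -> R) p).[x].

Definition pqstep (pq : {poly rat} * {poly rat}) (y : int) :=
  (((y%:~R : rat)%:P * 'X * pq.1 + pq.2), 'X * pq.1).

Definition PQ (m0 : int) (ms : seq int) :=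
  foldl pqstep (((m0%:~R : rat))%:P, 1) ms.

Lemma evPQ (x : R) m0 ms : 0 < x -> is_path x m0 ms ->
  ev x (PQ m0 ms).2 != 0 /\ cval x m0 ms = ev x (PQ m0 ms).1 / ev x (PQ m0 ms).2.
Proof.
move=> x0; elim/last_ind: ms => [|ms y IH].
  move=> _; rewrite /PQ /ev /= rmorph1 hornerC map_polyC hornerC /= ratr_int.
  by rewrite oner_neq0 divr1.
rewrite /is_path cdenoms_rcons all_rcons => /andP [c0 hp].
have [hQ hc] := IH hp.
rewrite /PQ foldl_rcons -/(PQ m0 ms) /cval foldl_rcons -/(cval x m0 ms).
move: c0 hQ hc; case: (PQ m0 ms) => P Q /= c0 hQ hc.
have hP : ev x P != 0 by move: c0; rewrite hc mulf_eq0 negb_or => /andP [].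
rewrite /ev /= !(rmorphM, rmorphD) /= !(hornerM, hornerD) map_polyX hornerX
  map_polyC hornerC /= ratr_int -/(ev x P) -/(ev x Q).
have xn : x != 0 by rewrite gt_eqF.
split; first by rewrite mulf_neq0.
rewrite hc /cstep; field.
by rewrite hP hQ xn.
Qed.

End Poly.
Arguments ev {R} x p.

Lemma normalize (R : realType) (q : R) m0 ms : 0 < q -> is_path q m0 ms ->
  exists m1 ms1, [/\ is_proper_path q m1 ms1, cval q m1 ms1 = cval q m0 ms &
                    weight q m1 ms1 = weight q m0 ms].
Proof.
move=> q0 hp.
have [d [s' [h1 h2 h3 h4 h5]]] := @reduce R q q0 _ _ _ (leqnn (size ms)) hp.
rewrite -intrD in h3 h4 h5.
exists (m0 + d), s'; split => //.
split => //.
case: s' {h1 h4 h5} h2 h3 => [|w r] //= h2 h3.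
rewrite /is_proper /= h2 andbT.
case/andP: h3; by rewrite intr_eq0.
Qed.

Lemma evM (R : realType) (x : R) p r : ev x (p * r) = ev x p * ev x r.
Proof. by rewrite /ev rmorphM hornerM. Qed.
Lemma evB (R : realType) (x : R) p r : ev x (p - r) = ev x p - ev x r.
Proof. by rewrite /ev rmorphB hornerD hornerN. Qed.

Theorem theorem2 (R : realType) (q : R) :
  0 < q -> (transcendental q \/ 4 <= q) ->
  (forall (a : R) (m0 : int) (ms : seq int) (n0 : int) (ns : seq int),
      is_proper_path q m0 ms -> is_proper_path q n0 ns ->
      cval q m0 ms = a -> cval q n0 ns = a ->
      m0 = n0 /\ ms = ns)
  /\ weight_unique q.
Proof.
move=> q0 H.
have U : forall (a : R) (m0 : int) (ms : seq int) (n0 : int) (ns : seq int),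
      is_proper_path q m0 ms -> is_proper_path q n0 ns ->
      cval q m0 ms = a -> cval q n0 ns = a ->
      m0 = n0 /\ ms = ns.
  move=> a m0 ms n0 ns [pm prm] [pn prn] ea eb.
  have e : cval q m0 ms = cval q n0 ns by rewrite ea eb.
  case: H => [tr|q4]; last exact: (@uniq4 R q q4 _ _ _ _ prm prn e).
  pose x4 : R := 4.
  have f4 : 4 <= x4 by [].
  have [hQm em] := @evPQ R q _ _ q0 pm.
  have [hQn en] := @evPQ R q _ _ q0 pn.
  have q4' : 0 < x4 by [].
  have [hQm4 em4] := @evPQ R x4 _ _ q4' (@proper_path R x4 f4 _ _ prm).
  have [hQn4 en4] := @evPQ R x4 _ _ q4' (@proper_path R x4 f4 _ _ prn).
  set D := (PQ m0 ms).1 * (PQ n0 ns).2 - (PQ n0 ns).1 * (PQ m0 ms).2.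
  have evq : ev q D = 0.
    rewrite /D evB !evM; apply/eqP; rewrite subr_eq0; apply/eqP.
    by apply/eqP; rewrite -eqr_div // -em -en e.
  have D0 : D = 0.
    apply/eqP; apply/negP => /negP Dn; apply: tr; exists D; split => //.
    by rewrite /root -/(ev q D) evq.
  have e4 : cval x4 m0 ms = cval x4 n0 ns.
    rewrite em4 en4; apply/eqP; rewrite eqr_div //; apply/eqP.
    by apply/eqP; rewrite -subr_eq0 -!evM -evB -/D D0 /ev rmorph0 horner0.
  exact: (@uniq4 R x4 f4 _ _ _ _ prm prn e4).
split => // m0 ms n0 ns pm pn e.
have [m1 [ms1 [h1 h2 h3]]] := @normalize R q _ _ q0 pm.
have [n1 [ns1 [g1 g2 g3]]] := @normalize R q _ _ q0 pn.
have [E1 E2] := U _ _ _ _ _ h1 g1 erefl (etrans g2 (etrans (esym e) (esym h2))).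
by rewrite -h3 -g3 E1 E2.
Qed.
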